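(* Let $\alpha_1,\alpha_2,\alpha_3\in\mathbb{Z}$ with $\alpha_1\ge\alpha_2\ge0\ge\alpha_3$, and put $b=-\alpha_1-\alpha_2-\alpha_3$, $c=\alpha_1\alpha_2+\alpha_1\alpha_3+\alpha_2\alpha_3$, $c_1=-\alpha_1\alpha_2\alpha_3$. Let $a_1>a_2>0$ be real numbers and set $$P=a_1^3a_2^2+a_1^2a_2^3+(a_1^2a_2+a_1a_2^2)bc_1+(a_1^2+a_2^2)c_1^2+2a_1^2a_2^2c.$$ Then the two inequalities $$P\le0\quad\text{and}\quad P^2-(a_1-a_2)^2\bigl((a_1+a_2)c_1^2-a_1^2a_2^2+a_1a_2bc_1\bigr)^2\ge0$$ hold simultaneously if and only if $-\alpha_2\alpha_3\le a_2<a_1\le-\alpha_1\alpha_3$. *)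

(* Defs.v *)
From Stdlib Require Import Reals ZArith.
Open Scope R_scope.

Definition Ppoly (a1 a2 b c c1 : R) : R :=
  a1^3 * a2^2 + a1^2 * a2^3 + (a1^2 * a2 + a1 * a2^2) * b * c1
  + (a1^2 + a2^2) * c1^2 + 2 * a1^2 * a2^2 * c.

(* Main.v *)
Require Import Defs.
From Stdlib Require Import Reals ZArith Lra Psatz.
Open Scope R_scope.

Lemma quad_le (t u v : R) : u <= v -> (t - u) * (t - v) <= 0 -> u <= t <= v.
Proof.
  intros H1 H2. destruct (Rle_dec u t); destruct (Rle_dec t v); try lra.
  all: nra.
Qed.

Lemma quad_le' (t u v : R) : u <= t <= v -> (t - u) * (t - v) <= 0.
Proof. intros H. assert (0 <= (t - u) * (v - t)) by (apply Rmult_le_pos; lra). nra. Qed.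

Lemma sign_aux (p q A B : R) : A > 0 -> B > 0 -> p * q >= 0 -> A * p + B * q <= 0 ->
  p <= 0 /\ q <= 0.
Proof.
  intros HA HB H1 H2.
  destruct (Rle_dec p 0); destruct (Rle_dec q 0); try lra; exfalso.
  - assert (0 < B * q) by (apply Rmult_lt_0_compat; lra).
    assert (p * q <= 0) by (assert (0 <= - p * q) by (apply Rmult_le_pos; lra); lra).
    assert (p = 0) by (destruct (Req_dec p 0); auto; assert (0 < (-p) * q) by (apply Rmult_lt_0_compat; lra); lra).
    subst; lra.
  - assert (0 < A * p) by (apply Rmult_lt_0_compat; lra).
    assert (q = 0) by (destruct (Req_dec q 0); auto; assert (0 < p * (-q)) by (apply Rmult_lt_0_compat; lra); lra).
    subst; lra.
  - assert (0 < A * p) by (apply Rmult_lt_0_compat; lra).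
    assert (0 < B * q) by (apply Rmult_lt_0_compat; lra). lra.
Qed.

Theorem lemma2 (al1 al2 al3 : Z) (a1 a2 : R)
  (h12 : (al1 >= al2)%Z) (h2 : (al2 >= 0)%Z) (h3 : (0 >= al3)%Z)
  (ha : a1 > a2) (ha2 : a2 > 0) :
  let b : R := IZR (- al1 - al2 - al3)%Z in
  let c : R := IZR (al1 * al2 + al1 * al3 + al2 * al3)%Z in
  let c1 : R := IZR (- (al1 * al2 * al3))%Z in
  let P := Ppoly a1 a2 b c c1 in
  (P <= 0 /\
   P^2 - (a1 - a2)^2 * ((a1 + a2) * c1^2 - a1^2 * a2^2 + a1 * a2 * b * c1)^2 >= 0)
  <->
  (IZR (- (al2 * al3))%Z <= a2 /\ a2 < a1 /\ a1 <= IZR (- (al1 * al3))%Z).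
Proof.
  intros b c c1 P.
  assert (HX : IZR al1 >= IZR al2) by (apply Rge_le in h12 || idtac; apply IZR_ge; exact h12).
  assert (HY : IZR al2 >= 0) by (apply IZR_ge; exact h2).
  assert (HZ : 0 >= IZR al3) by (apply IZR_ge; exact h3).
  unfold P, Ppoly, b, c, c1 in *.
  rewrite !opp_IZR, !minus_IZR, !plus_IZR, !mult_IZR, !opp_IZR.
  rewrite ?mult_IZR.
  set (X := IZR al1) in *. set (Y := IZR al2) in *. set (Z := IZR al3) in *.
  set (F := fun t => (t + X * Y) * ((t - (- (Y * Z))) * (t - (- (X * Z))))).
  match goal with |- (?PP <= 0 /\ ?QQ >= 0) <-> _ =>
    assert (E1 : PP = a1^2 * F a2 + a2^2 * F a1) by (unfold F; ring);
    assert (E2 : QQ = 4 * (a1^2 * a2^2) * (F a1 * F a2)) by (unfold F; ring)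
  end.
  rewrite E2, E1.
  assert (Hw : 0 <= X * Y) by nra.
  assert (Huv : - (Y * Z) <= - (X * Z)) by nra.
  assert (Hu : 0 <= - (Y * Z)) by nra.
  assert (Pa1 : a1 + X * Y > 0) by lra.
  assert (Pa2 : a2 + X * Y > 0) by lra.
  assert (Ka : 4 * (a1^2 * a2^2) > 0).
  { assert (0 < a1^2) by (apply pow_lt; lra). assert (0 < a2^2) by (apply pow_lt; lra).
    assert (0 < a1^2 * a2^2) by (apply Rmult_lt_0_compat; lra). lra. }
  split.
  - intros [H1 H2].
    assert (H3 : F a1 * F a2 >= 0).
    { destruct (Rle_dec 0 (F a1 * F a2)); try lra.
      assert (0 < 4 * (a1^2 * a2^2) * -(F a1 * F a2)) by (apply Rmult_lt_0_compat; lra). lra. }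
    destruct (sign_aux (F a1) (F a2) (a2^2) (a1^2)) as [G1 G2];
      try (apply pow_lt; lra); try lra.
    unfold F in G1, G2.
    assert (G1' : ((a1 - - (Y * Z)) * (a1 - - (X * Z))) <= 0).
    { destruct (Rle_dec ((a1 - - (Y * Z)) * (a1 - - (X * Z))) 0); auto.
      assert (0 < (a1 + X * Y) * ((a1 - - (Y * Z)) * (a1 - - (X * Z)))) by (apply Rmult_lt_0_compat; lra). lra. }
    assert (G2' : ((a2 - - (Y * Z)) * (a2 - - (X * Z))) <= 0).
    { destruct (Rle_dec ((a2 - - (Y * Z)) * (a2 - - (X * Z))) 0); auto.
      assert (0 < (a2 + X * Y) * ((a2 - - (Y * Z)) * (a2 - - (X * Z)))) by (apply Rmult_lt_0_compat; lra). lra. }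
    apply quad_le in G1'; auto. apply quad_le in G2'; auto.
    replace (- (X * Z)) with (- X * Z) in G1' by ring.
    replace (- (Y * Z)) with (- Y * Z) in G2' by ring.
    lra.
  - intros [H1 [_ H3]].
    replace (- X * Z) with (- (X * Z)) in H3 by ring.
    replace (- Y * Z) with (- (Y * Z)) in H1 by ring.
    assert (G1 : (a1 - - (Y * Z)) * (a1 - - (X * Z)) <= 0) by (apply quad_le'; lra).
    assert (G2 : (a2 - - (Y * Z)) * (a2 - - (X * Z)) <= 0) by (apply quad_le'; lra).
    assert (F1 : F a1 <= 0).
    { unfold F. assert (0 <= (a1 + X*Y) * - ((a1 - - (Y * Z)) * (a1 - - (X * Z)))) by (apply Rmult_le_pos; lra). lra. }
    assert (F2 : F a2 <= 0).
    { unfold F. assert (0 <= (a2 + X*Y) * - ((a2 - - (Y * Z)) * (a2 - - (X * Z)))) by (apply Rmult_le_pos; lra). lra. }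
    split.
    + assert (0 <= a1^2 * - F a2) by (apply Rmult_le_pos; [apply pow_le; lra | lra]).
      assert (0 <= a2^2 * - F a1) by (apply Rmult_le_pos; [apply pow_le; lra | lra]). lra.
    + assert (0 <= F a1 * F a2) by nra.
      assert (0 <= 4 * (a1^2 * a2^2) * (F a1 * F a2)) by (apply Rmult_le_pos; lra). lra.
Qed.
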